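(* Let $\sigma\in\mathrm{NC}_n$ and $1\le i<j\le n$. Then $(i,j)\in\mathrm{Inv}_{\mathrm{NC}}(\sigma)$ if and only if $i$ is the smallest element of its cycle of $\sigma$ and either (1) $j$ belongs to the same cycle as $i$, or (2) $\sigma(j)<i<j$ and $j$ is minimal with respect to this property.
   Context: A set partition of $[n]$ is noncrossing if there are no distinct blocks $P,Q$ with $a,b\in P$, $c,d\in Q$, $a<c<b<d$; the associated permutation acts on each block $\{a_1<\dots<a_p\}$ by $a_j\mapsto a_{j-1}$ ($j\ge2$), $a_1\mapsto a_p$; $\mathrm{NC}_n$ is the set of these noncrossing permutations, whose cycles are the blocks. For $\sigma\in\mathrm{NC}_n$, $\mathrm{Inv}_{\mathrm{NC}}(\sigma)=\{(i,j)\in[n]^2: i<j,\ \sigma\circ(i\,j)\in\mathrm{NC}_n,\ \sigma(i)>\sigma(j)\}$, where $(i\,j)$ is the transposition. *)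

(* Defs.v *)
(* Ground set [n] = {1..n} is modelled by 'I_n = {0..n-1}
   (shift by one; only the order on the ground set matters). *)
From mathcomp Require Import all_boot all_order all_fingroup.
Set Implicit Arguments. Unset Strict Implicit. Unset Printing Implicit Defensive.

Section NC.
Variable n : nat.
Local Notation T := 'I_n.

Definition noncrossing (P : {set {set T}}) : Prop :=
  forall (B C : {set T}) (a b c d : T),
    B \in P -> C \in P -> B != C ->
    a \in B -> b \in B -> c \in C -> d \in C ->
    ~ [/\ (a < c)%N, (c < b)%N & (b < d)%N].

(* y is the image of x under the permutation associated with the block B
   (B = {a_1 < ... < a_p}): a_j |-> a_{j-1} for j >= 2, a_1 |-> a_p. *)
Definition block_image (B : {set T}) (x y : T) : Prop :=
  y \in B /\
  ( ((y < x)%N /\ forall z, z \in B -> ~ ((y < z)%N /\ (z < x)%N))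
  \/ ((forall z, z \in B -> ~ (z < x)%N) /\ forall z, z \in B -> (z <= y)%N)).

Definition assoc_perm (P : {set {set T}}) (s : {perm T}) : Prop :=
  forall x : T, block_image (pblock P x) x (s x).

Definition is_NC (s : {perm T}) : Prop :=
  exists P : {set {set T}},
    [/\ partition P [set: T], noncrossing P & assoc_perm P s].

(* Inv_NC(sigma): sigma o (i j) is (tperm i j * sigma)%g in MathComp,
   since (s * t) x = t (s x). *)
Definition Inv_NC (s : {perm T}) (i j : T) : Prop :=
  [/\ (i < j)%N, is_NC (tperm i j * s)%g & (s j < s i)%N].

End NC.

(* Main.v *)
Require Import Defs.
From mathcomp Require Import all_boot all_order all_fingroup.
From mathcomp Require Import zify.
Set Implicit Arguments. Unset Strict Implicit. Unset Printing Implicit Defensive.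

Definition inI (a b z : nat) : Prop :=
  ((a < b)%N /\ (a < z)%N /\ (z < b)%N) \/ ((b <= a)%N /\ ((z < b)%N \/ (a < z)%N)).

Definition ncp n (s : {perm 'I_n}) := forall x z : 'I_n, inI (s x) x z -> inI (s x) x (s z).

Section Basic.
Variables (n : nat) (s : {perm 'I_n}).
Implicit Types x y z a b c : 'I_n.

Lemma nc_closure x y z :
  ncp s -> inI (s x) x y -> z \in porbit s y -> inI (s x) x z.
Proof.
move=> H Hy /porbitP [k ->]; elim: k => [|k IH]; first by rewrite expg0 perm1.
by rewrite expgSr permM; apply: H.
Qed.

Lemma porbit_s x : s x \in porbit s x.
Proof. by have := mem_porbit s 1 x; rewrite expg1. Qed.

Lemma porbit_eqs x : porbit s (s x) = porbit s x.
Proof. by have := porbit_perm s 1 x; rewrite expg1. Qed.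

Lemma porbit_trans x y z : y \in porbit s x -> z \in porbit s y -> z \in porbit s x.
Proof. by rewrite -eq_porbit_mem => /eqP ->. Qed.

Lemma noself x y : ncp s -> y \in porbit s x -> ~ inI (s x) x y.
Proof.
move=> H Hy Hi; rewrite porbit_sym in Hy.
have := nc_closure (z:=x) H Hi Hy; rewrite /inI; lia.
Qed.

Lemma cyclemin x y : ncp s -> (x <= s x)%N -> y \in porbit s x ->
  (x <= y)%N /\ (y <= s x)%N.
Proof. move=> H Hx Hy; have := noself H Hy; rewrite /inI; lia. Qed.

Lemma descent x y : ncp s -> y \in porbit s x -> (x < y)%N -> (s y < y)%N.
Proof.
move=> H Hy Hxy; rewrite ltnNge; apply/negP => Hle.
rewrite porbit_sym in Hy; have := cyclemin H Hle Hy; lia.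
Qed.

Lemma gap x a b c : ncp s -> a \in porbit s x -> b \in porbit s x ->
  (a < c)%N -> (c < b)%N -> c \notin porbit s x ->
  exists k, k \in porbit s x /\ (s k < c)%N /\ (c < k)%N /\ (k <= b)%N.
Proof.
move=> H Ha Hb Hac Hcb Hc.
have Pb : (b \in porbit s x) && (c < b)%N by rewrite Hb Hcb.
case: (@arg_minnP _ b (fun k : 'I_n => (k \in porbit s x) && (c < k)%N) (fun k : 'I_n => val k) Pb) => k /andP [Hk Hck] Hmin.
exists k; split => //; split; last by split => //; apply: Hmin; rewrite Hb Hcb.
have Hsk : s k \in porbit s x by apply: porbit_trans Hk (porbit_s k).
have Hne : s k != c by apply: contraNneq Hc => <-.
rewrite ltnNge; apply/negP => Hle.
have Hlt : (c < s k)%N by rewrite ltn_neqAle eq_sym Hle andbT; apply: contra Hne => /eqP/val_inj ->.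
have := Hmin _ (introT andP (conj Hsk Hlt)) => Hks.
have Ha' : a \in porbit s k by rewrite -eq_porbit_mem in Hk; rewrite (eqP Hk).
have := cyclemin H Hks Ha'; lia.
Qed.


Lemma porbits_partition : partition (porbits s) [set: 'I_n].
Proof.
apply/and3P; split.
- apply/eqP/setP => x; rewrite inE; apply/bigcupP; exists (porbit s x).
    by apply: imset_f.
  exact: porbit_id.
- apply/trivIsetP => A B /imsetP [a _ ->] /imsetP [b _ ->] Hne.
  apply/pred0P => z /=; apply/negbTE; apply: contra Hne => /andP [Ha Hb].
  by rewrite -eq_porbit_mem in Ha; rewrite -eq_porbit_mem in Hb; rewrite -(eqP Ha) (eqP Hb).
- apply/imsetP => [[x _ Hx]].
  by have := porbit_id s x; rewrite -Hx inE.
Qed.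

Lemma pblock_porbits x : pblock (porbits s) x = porbit s x.
Proof.
apply: def_pblock; last exact: porbit_id.
  by case/and3P: porbits_partition.
exact: imset_f.
Qed.

End Basic.

Lemma arith_nc (x sx z sz : nat) :
  sz != x -> sz != sx -> z != x -> z != sx ->
  ~ ((sz < sx) /\ (sx < z) /\ (z < x)) ->
  ~ ((sx < z) /\ (z < x) /\ (x < sz)) ->
  ~ ((z < x) /\ (x < sz) /\ (sz < sx)) ->
  ~ ((x < sz) /\ (sz < sx) /\ (sx < z)) ->
  inI sx x z -> inI sx x sz.
Proof. unfold inI; lia. Qed.

Lemma inI_self a b : ~ inI a b b.
Proof. unfold inI; lia. Qed.

Lemma nc4 n (P : {set {set 'I_n}}) B C (a b c d : 'I_n) : noncrossing P ->
  B \in P -> C \in P -> B != C -> a \in B -> b \in B -> c \in C -> d \in C ->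
  ~ ((a < c)%N /\ (c < b)%N /\ (b < d)%N).
Proof. move=> H BP CP BC Ha Hb Hc Hd [h1 [h2 h3]]; exact: (H B C a b c d). Qed.

Lemma isNC_ncp n (s : {perm 'I_n}) : is_NC s -> ncp s.
Proof.
case=> P [HP Hnc Has] x z Hz.
have trP : trivIset P by case/and3P: HP.
have cov : cover P = setT by apply: cover_partition.
have inC w : w \in cover P by rewrite cov inE.
set B := pblock P x; set C := pblock P z.
have BP : B \in P by apply: pblock_mem.
have CP : C \in P by apply: pblock_mem.
have xB : x \in B by rewrite mem_pblock.
have zC : z \in C by rewrite mem_pblock.
have [sxB Hbi] := Has x; have [szC _] := Has z.
have zB : z \notin B.
  apply/negP => zB; move: Hz; rewrite /inI.
  case: Hbi => [[h1 h2] | [h1 h2]].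
    by have := h2 z zB; lia.
  by have := h1 z zB; have := h2 z zB; lia.
have BC : B != C by apply: contraNneq zB => ->.
have szB : s z \notin B.
  apply/negP => szB; move/negP: BC; apply; apply/eqP.
  by rewrite -(def_pblock trP BP szB) (def_pblock trP CP szC).
have ne1 : (s z : nat) != x by apply: contraNneq szB => /val_inj ->.
have ne2 : (s z : nat) != s x by apply: contraNneq szB => /val_inj ->.
have ne3 : (z : nat) != x by apply: contraNneq zB => /val_inj ->.
have ne4 : (z : nat) != s x by apply: contraNneq zB => /val_inj ->.
have CB : C != B by rewrite eq_sym.
apply: (arith_nc ne1 ne2 ne3 ne4 _ _ _ _ Hz).
- exact: nc4 Hnc CP BP CB szC zC sxB xB.
- exact: nc4 Hnc BP CP BC sxB xB zC szC.
- exact: nc4 Hnc CP BP CB zC szC xB sxB.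
- exact: nc4 Hnc BP CP BC xB sxB szC zC.
Qed.

Lemma ncp_isNC n (s : {perm 'I_n}) : ncp s -> is_NC s.
Proof.
move=> H; exists (porbits s); split.
- exact: porbits_partition.
- move=> B C a b c d /imsetP [x0 _ ->] /imsetP [y0 _ ->] BC Ha Hb Hc Hd [h1 h2 h3].
  have cB : c \notin porbit s x0.
    apply: contraNN BC => Hc'; have Hc2 := Hc; rewrite -eq_porbit_mem in Hc'; rewrite -eq_porbit_mem in Hc2.
    by rewrite -(eqP Hc') -(eqP Hc2).
  have [k [Hk [h4 [h5 h6]]]] := gap H Ha Hb h1 h2 cB.
  have Hi : inI (s k) k c by rewrite /inI; lia.
  have Hd' : d \in porbit s c by rewrite -eq_porbit_mem in Hc; rewrite (eqP Hc).
  have := nc_closure H Hi Hd'; rewrite /inI; lia.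
- move=> x; rewrite pblock_porbits; split; first exact: porbit_s.
  case: (ltnP (s x) x) => h.
    by left; split => // w Hw; have := noself H Hw; rewrite /inI; lia.
  by right; split => w Hw; have := noself H Hw; rewrite /inI; lia.
Qed.


Lemma merge n (p : {perm 'I_n}) (a b : 'I_n) : b \notin porbit p a ->
  forall w, w \in porbit p b -> w \in porbit (tperm a b * p) a.
Proof.
move=> Hab; set t := (tperm a b * p)%g.
have ta : t a = p b by rewrite permM tpermL.
have Hstep : forall k, (p ^+ k.+1)%g b \in porbit t (p b).
  elim => [|k IH]; first by rewrite expg1 porbit_id.
  rewrite expgSr permM; move: IH; set y := (p ^+ k.+1)%g b => IH.
  case: (eqVneq y b) => [->|nyb]; first exact: porbit_id.
  have nya : y != a.
    apply: contraNneq Hab => ya; rewrite porbit_sym -ya; exact: mem_porbit.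
  have -> : p y = t y by rewrite permM tpermD // eq_sym.
  exact: porbit_trans IH (porbit_s t y).
move=> w /porbitP [k ->].
rewrite -(porbit_eqs t a) ta.
case: k => [|k]; last exact: Hstep.
have := card_porbit_neq0 p b; case Hc: #|porbit p b| => [|m] // _.
by rewrite expg0 perm1 -{1}(iter_porbit p b) Hc -permX; apply: Hstep.
Qed.

Theorem proposition8p16 (n : nat) (s : {perm 'I_n}) (i j : 'I_n) :
  is_NC s -> (i < j)%N ->
  (Inv_NC s i j <->
   ((forall k : 'I_n, k \in porbit s i -> (i <= k)%N) /\
    (j \in porbit s i \/
     ([/\ (s j < i)%N, (i < j)%N &
        forall k : 'I_n, (s k < i)%N -> (i < k)%N -> (j <= k)%N])))).
Proof.
move=> HNC hij; have H := isNC_ncp HNC.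
set t := (tperm i j * s)%g.
have ti : t i = s j by rewrite permM tpermL.
have tj : t j = s i by rewrite permM tpermR.
have tk : forall k, k != i -> k != j -> t k = s k.
  by move=> k ki kj; rewrite permM tpermD // eq_sym.
have nij : i != j by apply: contraTneq hij => ->; rewrite ltnn.
have inj : forall a b : 'I_n, a != b -> (s a : nat) != s b.
  by move=> a b ab; apply: contra ab => /eqP/val_inj/perm_inj ->.
have neqn : forall a b : 'I_n, a != b -> (a : nat) != b.
  by move=> a b ab; apply: contra ab => /eqP/val_inj ->.
split.
- case=> [_ HNCt hs]; have Ht := isNC_ncp HNCt.
  have hii : (i <= s i)%N.
    rewrite leqNgt; apply/negP => hlt.
    have := Ht j i; rewrite tj ti; unfold inI; lia.
  split; first by move=> k Hk; exact: (cyclemin H hii Hk).1.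
  case: (boolP (j \in porbit s i)) => hj; [by left | right].
  have Mj : j \in porbit t i := merge hj (porbit_id s j).
  have Msi : s i \in porbit t j.
    have hi : i \notin porbit s j by rewrite porbit_sym.
    by have := merge hi (porbit_s s i); rewrite tpermC.
  have hsj : (s j < i)%N.
    rewrite ltnNge; apply/negP => hle.
    have ne : (s j : nat) != i.
      apply: contraNneq hj => /val_inj e; rewrite porbit_sym -e; exact: porbit_s.
    have ne2 : (j : nat) != s i.
      by apply: contraNneq hj => /val_inj ->; exact: porbit_s.
    have Hsi_i : i \in porbit t (s i).
      by rewrite porbit_sym; apply: porbit_trans Mj Msi.
    have C1 : inI (t i) i (s i) -> inI (t i) i i.
      by move=> h; exact: nc_closure Ht h Hsi_i.
    rewrite ti in C1.
    have := H i j; unfold inI in *; lia.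
  split => // k h1 h2; rewrite leqNgt; apply/negP => hkj.
  have ki : k != i by apply: contraTneq h2 => ->; rewrite ltnn.
  have kj : k != j by apply: contraTneq hkj => ->; rewrite ltnn.
  have C2 : inI (t k) k i -> inI (t k) k j.
    by move=> h; exact: nc_closure Ht h Mj.
  rewrite tk // in C2; unfold inI in *; lia.
- case=> [Hmin Hor].
  have hii : (i <= s i)%N := Hmin _ (porbit_s s i).
  have hs : (s j < s i)%N.
    case: Hor => [hj | [h _ _]]; last by lia.
    have := (cyclemin H hii (porbit_trans hj (porbit_s s j))).2.
    have := inj _ _ nij; lia.
  split => //; apply: ncp_isNC.
  have pre : forall y : 'I_n, (s y : nat) = i -> (i <= y)%N.
    move=> y /val_inj e; apply: Hmin; rewrite porbit_sym -e; exact: porbit_s.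
  move=> x z.
  case: Hor => [hj | [hsj _ hmin2]].
  + have F2 : (i <= s j)%N := (cyclemin H hii (porbit_trans hj (porbit_s s j))).1.
    have F3 : (s j < j)%N := descent H hj hij.
    have F4 : (j <= s i)%N := (cyclemin H hii hj).2.
    have hi : i \in porbit s j by rewrite porbit_sym.
    have Cl1 y : inI (s y) y i -> inI (s y) y j by move=> h; exact: nc_closure H h hj.
    have Cl2 y : inI (s y) y j -> inI (s y) y i by move=> h; exact: nc_closure H h hi.
    have Cl3 y : inI (s y) y j -> inI (s y) y (s i).
      by move=> h; exact: nc_closure H h (porbit_trans hi (porbit_s s i)).
    have A1 := inj _ _ nij; have A2 := neqn _ _ nij.
    case: (eqVneq x i) => [->|xi]; [|case: (eqVneq x j) => [->|xj]].
    * rewrite ti; case: (eqVneq z i) => [->|zi]; first by move/inI_self.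
      case: (eqVneq z j) => [->|zj].
        by rewrite tj; move: hs hij A1; clear -s i j; unfold inI; lia.
      rewrite (tk z zi zj).
      have := H i z; have := H j z; have := Cl3 z; have := inj _ _ zj.
      have := neqn _ _ zi; have := neqn _ _ zj.
      by move: F2 F3 F4 hij hii hs; clear -s i j z; unfold inI; lia.
    * rewrite tj; case: (eqVneq z j) => [->|zj]; first by move/inI_self.
      case: (eqVneq z i) => [->|zi].
        by rewrite ti; move: F2 F3 F4 hij hii hs A1; clear -s i j; unfold inI; lia.
      rewrite (tk z zi zj).
      have := H i z; have := H j z; have := Cl1 z; have := inj _ _ zi.
      have := neqn _ _ zi; have := neqn _ _ zj.
      by move: F2 F3 F4 hij hii hs; clear -s i j z; unfold inI; lia.
    * rewrite (tk x xi xj).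
      case: (eqVneq z i) => [->|zi].
        rewrite ti; have := Cl1 x; have := H x j.
        by clear -s i j x; unfold inI; lia.
      case: (eqVneq z j) => [->|zj].
        rewrite tj; have := Cl2 x; have := H x i.
        by clear -s i j x; unfold inI; lia.
      by rewrite (tk z zi zj); apply: H.
  + have CM : forall y : 'I_n, (y < i)%N -> (i < s y)%N -> (j <= s y)%N.
      move=> y h1 h2.
      have hy : i \notin porbit s y.
        apply/negP => hy; rewrite porbit_sym in hy; have := Hmin _ hy; lia.
      have [k [Hk [k1 [k2 k3]]]] := gap H (porbit_id s y) (porbit_s s y) h1 h2 hy.
      have := hmin2 k k1 k2; lia.
    have A1 := inj _ _ nij; have A2 := neqn _ _ nij.
    case: (eqVneq x i) => [->|xi]; [|case: (eqVneq x j) => [->|xj]].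
    * rewrite ti; case: (eqVneq z i) => [->|zi]; first by move/inI_self.
      case: (eqVneq z j) => [->|zj].
        by rewrite tj; move: hs hsj hij A1; clear -s i j; unfold inI; lia.
      rewrite (tk z zi zj).
      have := H i z; have := H j z; have := CM z; have := pre z.
      have := neqn _ _ zi; have := neqn _ _ zj.
      by move: hsj hij hii hs; clear -s i j z; unfold inI; lia.
    * rewrite tj; case: (eqVneq z j) => [->|zj]; first by move/inI_self.
      case: (eqVneq z i) => [->|zi].
        by rewrite ti; move: hsj hij hii hs A1; clear -s i j; unfold inI; lia.
      rewrite (tk z zi zj).
      have := H i z; have := H j z; have := H j i; have := hmin2 z; have := inj _ _ zi.
      have := neqn _ _ zi; have := neqn _ _ zj.
      by move: hsj hij hii hs; clear -s i j z; unfold inI; lia.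
    * rewrite (tk x xi xj).
      case: (eqVneq z i) => [->|zi].
        rewrite ti; have := hmin2 x; have := H x j; have := neqn _ _ xj.
        by move: hsj hij hii hs; clear -s i j x; unfold inI; lia.
      case: (eqVneq z j) => [->|zj].
        rewrite tj; have := H x i; have := H x j; have := CM x; have := inj _ _ xi.
        have := neqn _ _ xi; have := neqn _ _ xj.
        by move: hsj hij hii hs; clear -s i j x; unfold inI; lia.
      by rewrite (tk z zi zj); apply: H.
Qed.
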